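(* Let $a\in(0,0.5)$. Let $f(\phi\mid \mathrm{HS+})$ and $f(\phi\mid\mathrm{HTHS+})$ denote the univariate marginal prior densities of $\phi$ under the HS+ and HTHS+ priors (defined in the context). Then there exist positive numbers $C_a$ and $D_a$ such that for all $\phi\neq 0$, $$C_a\, f(\phi\mid \mathrm{HS+})\le \frac{a\,2^{a-1}}{\sqrt{\pi}\,|\phi|^{1+2a}}\,\Gamma_L\!\left(0.5+a,\tfrac{\phi^2}{2}\right)+\frac{a\,2^{-a-1}}{\sqrt{\pi}\,|\phi|^{1-2a}}\,\Gamma_U\!\left(0.5-a,\tfrac{\phi^2}{2}\right)\le D_a\, f(\phi\mid \mathrm{HTHS+}).$$
   Context: Under both priors, $\phi\mid\gamma\sim\mathcal{N}(0,1/\gamma)$ with $\gamma>0$. Under HS+, $\gamma$ has density $\pi(\gamma)=\frac{\gamma^{-1/2}\log\gamma}{\pi^2(\gamma-1)}$ on $(0,\infty)$. Under HTHS+, $\gamma$ has the log-Cauchy density $\pi(\gamma)=\frac{2}{\gamma\left((\log\gamma)^2+4\pi^2\right)}$ on $(0,\infty)$. The marginal density of $\phi$ is $f(\phi)=\int_0^\infty \mathcal{N}(\phi\mid 0,1/\gamma)\pi(\gamma)\,\mathrm{d}\gamma$. $\Gamma_L(s,x)=\int_0^x t^{s-1}e^{-t}\,\mathrm{d}t$ and $\Gamma_U(s,x)=\int_x^\infty t^{s-1}e^{-t}\,\mathrm{d}t$ are the lower and upper incomplete gamma functions. *)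

(* Defs.v *)
From HB Require Import structures.
From mathcomp Require Import all_boot all_order all_algebra.
From mathcomp Require Import all_classical all_reals all_analysis.
Set Implicit Arguments. Unset Strict Implicit. Unset Printing Implicit Defensive.
Import Order.TTheory GRing.Theory Num.Theory.
Import numFieldNormedType.Exports.
Local Open Scope classical_set_scope.
Local Open Scope ring_scope.

Section Defs.
Variable R : realType.

Definition normal_prec (gam phi : R) : R :=
  Num.sqrt (gam / (2 * pi)) * expR (- (gam * phi ^+ 2) / 2).

Definition hsplus_dens (gam : R) : R :=
  (gam `^ (- (1/2)) * ln gam) / (pi ^+ 2 * (gam - 1)).

(* HTHS+ (log-Cauchy) mixing density of gamma on (0,oo) *)
Definition hthsplus_dens (gam : R) : R :=
  2 / (gam * ((ln gam) ^+ 2 + 4 * pi ^+ 2)).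

Definition marginal (dens : R -> R) (phi : R) : \bar R :=
  (\int[lebesgue_measure]_(gam in `]0%R, +oo[) (normal_prec gam phi * dens gam)%:E)%E.

Definition f_HS (phi : R) : \bar R := marginal hsplus_dens phi.
Definition f_HTHS (phi : R) : \bar R := marginal hthsplus_dens phi.

Definition GammaL (s x : R) : \bar R :=
  (\int[lebesgue_measure]_(t in `]0%R, x[) (t `^ (s - 1) * expR (- t))%:E)%E.
Definition GammaU (s x : R) : \bar R :=
  (\int[lebesgue_measure]_(t in `]x, +oo[) (t `^ (s - 1) * expR (- t))%:E)%E.

End Defs.

(* Main.v *)
Require Import Defs.
From HB Require Import structures.
From mathcomp Require Import all_boot all_order all_algebra.
From mathcomp Require Import all_classical all_reals all_analysis.
From mathcomp Require Import measurable_realfun.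
From mathcomp Require Import ring lra.
Import Order.TTheory GRing.Theory Num.Theory.
Import numFieldNormedType.Exports.
Local Open Scope classical_set_scope.
Local Open Scope ring_scope.

Section Aux.
Variable R : realType.
Local Notation mu := (@lebesgue_measure R).

Lemma measurable_inv : measurable_fun [set: R] (@GRing.inv R).
Proof.
have -> : [set: R] = (`]-oo, 0[ `|` [set 0]) `|` `]0, +oo[.
  apply/seteqP; split => x //= _; rewrite !in_itv /=.
  case: (ltgtP x 0) => h; [by left; left|by right|by left; right].
apply/measurable_funU => //; first exact: measurableU.
split; first (apply/measurable_funU => //; split; last exact: measurable_fun_set1).
  apply: open_continuous_measurable_fun; first exact: interval_open.
  by move=> x; rewrite inE /= in_itv /= => x0; apply: inv_continuous; rewrite lt_eqF.
apply: open_continuous_measurable_fun; first exact: interval_open.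
by move=> x; rewrite inE /= in_itv /= andbT => x0; apply: inv_continuous; rewrite gt_eqF.
Qed.

Lemma measurable_mulc (c : R) : measurable_fun [set: R] ( *%R c).
Proof. by apply: measurable_funM => //; exact: measurable_cst. Qed.

Lemma scale_integral (c : R) (D : set R) (f : R -> \bar R) : 0 < c ->
  measurable D -> measurable_fun D f -> (forall x, D x -> (0 <= f x)%E) ->
  (\int[mu]_(y in D) f y =
   c%:E * \int[mu]_(x in ( *%R c) @^-1` D) f (c * x)%R)%E.
Proof.
move=> c0 mD mf f0.
pose cn : {nonneg R} := NngNum (ltW c0).
have mh := measurable_mulc c.
have mh' : measurable_fun [set: measurableTypeR R] (( *%R c) : measurableTypeR R -> measurableTypeR R) := mh.
pose P := measure_function_pushforward__canonical__measure_function_Measure (mscale cn mu) mh'.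
have E : forall A, measurable A -> mu A = pushforward (mscale cn mu) ( *%R c) A.
  apply: (@lebesgue_measure_unique R (measure_function_pushforward__canonical__measure_function_Measure (mscale cn mu) mh')) => _ [[x y] _ <-] /=.
  rewrite /pushforward /mscale /=.
  have -> : ( *%R c) @^-1` `]x, y] = `]x / c, y / c]%classic.
    apply/seteqP; split => z /=; rewrite !in_itv /=.
      by rewrite ltr_pdivrMr // ler_pdivlMr // ![z * c]mulrC.
    by rewrite ltr_pdivrMr // ler_pdivlMr // ![z * c]mulrC.
  rewrite !lebesgue_measure_itv /= !lte_fin ltr_pM2r ?invr_gt0 //.
  case: ifP => _; last by rewrite mule0.
  rewrite -EFinM; congr EFin. rewrite -mulrBl mulrCA mulfV ?mulr1 // gt_eqF //.
rewrite (eq_measure_integral P); last first.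
  by move=> A mA _; exact: E.
rewrite ge0_integral_pushforward //; last by move=> y /set_mem; exact: f0.
have mpre : measurable (( *%R c) @^-1` D).
  by have := mh measurableT D mD; rewrite setTI.
rewrite ge0_integral_mscale //=; last by move=> x; exact: f0.
apply: (measurable_comp mD) => //; try by move=> _ [x Dx <-].
Qed.
End Aux.

Section Real.
Variable R : realType.

Lemma powRE (x r : R) : 0 < x -> x `^ r = expR (r * ln x).
Proof. by move=> x0; rewrite /powR gt_eqF. Qed.

Lemma sqrt_expR (L : R) : Num.sqrt (expR L) = expR (L / 2).
Proof.
rewrite -[expR L](_ : expR (L / 2) ^+ 2 = _); last first.
  by rewrite expr2 -expRD; congr expR; field.
by rewrite sqrtr_sqr ger0_norm // expR_ge0.
Qed.

Definition pa (a x : R) := Num.min (x `^ (a - 1/2)) (x `^ (- a - 1/2)).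

Lemma lower_core (b L : R) : 0 < b -> b < 1/2 ->
  b * L / (expR L - 1) <= Num.min (expR (- b * L)) (expR ((b - 1) * L)).
Proof.
move=> b0 b1.
have [L0|L0|->] := ltgtP L 0; last by rewrite mulr0 mul0r le_min !expR_ge0.
- have e1 : expR L - 1 < 0 by rewrite subr_lt0 expR_lt1.
  have Hm : expR (- b * L) <= expR ((b - 1) * L) by rewrite ler_expR; nra.
  have h1 := expR_ge1Dx (- b * L).
  have h2 : expR ((1 - b) * L) <= 1 by rewrite expR_le1; nra.
  have h3 : expR (- b * L) * expR L = expR ((1 - b) * L).
    by rewrite -expRD; congr expR; ring.
  have H : b * L / (expR L - 1) <= expR (- b * L).
    rewrite ler_ndivrMr // mulrBr mulr1 h3; lra.
  by rewrite le_min H (le_trans H Hm).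
- have e1 : 0 < expR L - 1 by rewrite subr_gt0 expR_gt1.
  have Hm : expR ((b - 1) * L) <= expR (- b * L) by rewrite ler_expR; nra.
  have h1 := expR_ge1Dx (b * L).
  have h2 : expR ((b - 1) * L) <= 1 by rewrite expR_le1; nra.
  have h3 : expR ((b - 1) * L) * expR L = expR (b * L).
    by rewrite -expRD; congr expR; ring.
  have H : b * L / (expR L - 1) <= expR ((b - 1) * L).
    rewrite ler_pdivrMr // mulrBr mulr1 h3; lra.
  by rewrite le_min H (le_trans H Hm).
Qed.

Lemma upper_core (a L K : R) : 0 < a -> 0 <= K ->
  Num.min (expR ((a - 1/2) * L)) (expR ((- a - 1/2) * L)) * expR L * (L ^+ 2 + K)
  <= expR (L / 2) * (4 / a ^+ 2 + K).
Proof.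
move=> a0 K0.
have L2 : 0 <= L ^+ 2 by exact: sqr_ge0.
have [L0|L0] := leP L 0.
- have Hm : Num.min (expR ((a - 1/2) * L)) (expR ((- a - 1/2) * L)) <= expR ((a - 1/2) * L) by rewrite ge_min lexx.
  have E1 : expR ((a - 1/2) * L) * expR L = expR (L / 2) * expR (a * L).
    by rewrite -!expRD; congr expR; field.
  have q1 : expR (a * L) <= 1 by rewrite expR_le1; nra.
  have h1 := expR_ge1Dx (- a * L / 2).
  have E2 : expR (- a * L / 2) ^+ 2 * expR (a * L) = 1.
    by rewrite expr2 -!expRD -[RHS]expR0; congr expR; field.
  have q2 : expR (a * L) * L ^+ 2 <= 4 / a ^+ 2.
    rewrite ler_pdivlMr ?exprn_gt0 //.
    have p0 : 0 <= - a * L / 2 by nra.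
    have : (- a * L / 2) ^+ 2 <= expR (- a * L / 2) ^+ 2.
      have : - a * L / 2 <= expR (- a * L / 2) by lra.
      move=> hh; rewrite !expr2; exact: ler_pM.
    have eq : (- a * L / 2) ^+ 2 = a ^+ 2 * L ^+ 2 / 4 by field.
    rewrite eq => h.
    have := ler_wpM2r (expR_ge0 (a * L)) h; rewrite E2 => h'.
    nra.
  have e0 := expR_gt0 (L / 2).
  have ea := expR_gt0 (a * L).
  apply: (le_trans (y := expR ((a - 1/2) * L) * expR L * (L ^+ 2 + K))).
    by rewrite ler_wpM2r ?addr_ge0 // ler_wpM2r ?expR_ge0.
  rewrite E1 -mulrA ler_wpM2l ?expR_ge0 // mulrDr; nra.
- have Hm : Num.min (expR ((a - 1/2) * L)) (expR ((- a - 1/2) * L)) <= expR ((- a - 1/2) * L) by rewrite ge_min lexx orbT.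
  have E1 : expR ((- a - 1/2) * L) * expR L = expR (L / 2) * expR (- a * L).
    by rewrite -!expRD; congr expR; field.
  have q1 : expR (- a * L) <= 1 by rewrite expR_le1; nra.
  have h1 := expR_ge1Dx (a * L / 2).
  have E2 : expR (a * L / 2) ^+ 2 * expR (- a * L) = 1.
    by rewrite expr2 -!expRD -[RHS]expR0; congr expR; field.
  have q2 : expR (- a * L) * L ^+ 2 <= 4 / a ^+ 2.
    rewrite ler_pdivlMr ?exprn_gt0 //.
    have p0 : 0 <= a * L / 2 by nra.
    have : (a * L / 2) ^+ 2 <= expR (a * L / 2) ^+ 2.
      have : a * L / 2 <= expR (a * L / 2) by lra.
      move=> hh; rewrite !expr2; exact: ler_pM.
    have eq : (a * L / 2) ^+ 2 = a ^+ 2 * L ^+ 2 / 4 by field.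
    rewrite eq => h.
    have := ler_wpM2r (expR_ge0 (- a * L)) h; rewrite E2 => h'.
    nra.
  have e0 := expR_gt0 (L / 2).
  have ea := expR_gt0 (- a * L).
  apply: (le_trans (y := expR ((- a - 1/2) * L) * expR L * (L ^+ 2 + K))).
    by rewrite ler_wpM2r ?addr_ge0 // ler_wpM2r ?expR_ge0.
  rewrite E1 -mulrA ler_wpM2l ?expR_ge0 // mulrDr; nra.
Qed.
End Real.

Arguments pa {R}.
Section Pt.
Variable R : realType.

Lemma sqrt_div2pi (x : R) : 0 <= x ->
  Num.sqrt (x / (2 * pi)) = Num.sqrt x / Num.sqrt (2 * pi).
Proof.
move=> x0; rewrite sqrtrM // sqrtrV //.
by rewrite mulr_ge0 // ltW // pi_gt0.
Qed.

Lemma lower_pt (a phi x K : R) : 0 < a -> a < 1/2 -> 0 < x -> 0 <= K ->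
  K * Num.sqrt (2 * pi) * pi ^+ 2 * (1/2 - a) * (normal_prec x phi * hsplus_dens x)
  <= K * (pa a x * expR (- (x * phi ^+ 2) / 2)).
Proof.
move=> a0 a1 x0 K0.
have pi0 : 0 < pi :> R := pi_gt0 R.
have s0 : 0 < Num.sqrt (2 * pi) :> R by rewrite sqrtr_gt0 mulr_gt0.
set L := ln x.
have xE : expR L = x by rewrite /L lnK // posrE.
have key := @lower_core R (1/2 - a) L ltac:(lra) ltac:(lra).
rewrite xE in key.
rewrite (_ : - (1/2 - a) = a - 1/2) in key; last by lra.
rewrite (_ : 1/2 - a - 1 = - a - 1/2) in key; last by lra.
rewrite /normal_prec /hsplus_dens /pa !powRE // -/L.
rewrite sqrt_div2pi ?(ltW x0) // -xE sqrt_expR xE.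
have e1 : expR (L / 2) * expR (- (1 / 2) * L) = 1.
  by rewrite -expRD -[RHS]expR0; congr expR; field.
set E' := expR (- (x * phi ^+ 2) / 2).
have E0 : 0 <= E' by exact: expR_ge0.
rewrite [(pi ^+ 2 * (x - 1))^-1]invfM.
set d := (x - 1)^-1.
rewrite -/d in key.
set m := Num.min _ _ in key *.
have -> : K * Num.sqrt (2 * pi) * pi ^+ 2 * (1 / 2 - a) *
  (expR (L / 2) / Num.sqrt (2 * pi) * E' * (expR (- (1 / 2) * L) * L * ((pi ^+ 2)^-1 * d)))
  = K * E' * ((1/2 - a) * L * d) * (expR (L / 2) * expR (- (1 / 2) * L)).
  move: s0 pi0; set s := Num.sqrt _; set p := (pi : R); clearbody s p => s0 p0.
  by field; rewrite ?gt_eqF ?expf_gt0.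
rewrite e1 mulr1 -[K * E' * _]mulrA; apply: ler_wpM2l => //; rewrite mulrC; exact: ler_wpM2r.
Qed.

Lemma upper_pt (a phi x K : R) : 0 < a -> 0 < x -> 0 <= K ->
  K * (pa a x * expR (- (x * phi ^+ 2) / 2)) <=
  K * Num.sqrt (2 * pi) * ((4 / a ^+ 2 + 4 * pi ^+ 2) / 2) * (normal_prec x phi * hthsplus_dens x).
Proof.
move=> a0 x0 K0.
have pi0 : 0 < pi :> R := pi_gt0 R.
have s0 : 0 < Num.sqrt (2 * pi) :> R by rewrite sqrtr_gt0 mulr_gt0.
set L := ln x.
have xE : expR L = x by rewrite /L lnK // posrE.
have key := @upper_core R a L (4 * pi ^+ 2) a0 ltac:(by rewrite mulr_ge0 // sqr_ge0).
rewrite xE in key.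
rewrite /normal_prec /hthsplus_dens /pa !powRE // -/L.
rewrite sqrt_div2pi ?(ltW x0) // -xE sqrt_expR xE.
set E' := expR (- (x * phi ^+ 2) / 2).
have E0 : 0 <= E' by exact: expR_ge0.
set m := Num.min _ _ in key *.
set Q := 4 / a ^+ 2 + 4 * pi ^+ 2 in key *.
have P0 : 0 < L ^+ 2 + 4 * pi ^+ 2.
  by apply: ltr_wpDl; [exact: sqr_ge0| rewrite mulr_gt0 // exprn_gt0].
have -> : K * Num.sqrt (2 * pi) * (Q / 2) *
    (expR (L / 2) / Num.sqrt (2 * pi) * E' * (2 / (x * (L ^+ 2 + 4 * pi ^+ 2))))
  = K * E' * (expR (L / 2) * Q / (x * (L ^+ 2 + 4 * pi ^+ 2))).
  move: s0 pi0 P0; set s := Num.sqrt _; set p := (pi : R); clearbody s p => s0 p0 P0.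
  by field; rewrite ?gt_eqF ?mulr_gt0.
rewrite -[K * E' * _]mulrA; apply: ler_wpM2l => //; rewrite [m * E']mulrC; apply: ler_wpM2l => //.
by rewrite ler_pdivlMr ?mulr_gt0 // mulrA.
Qed.
End Pt.

Section Meas.
Variable R : realType.
Local Notation mu := (@lebesgue_measure R).

Ltac mfun := repeat first [ exact: measurable_cst | exact: measurable_id
  | apply: measurable_funM | apply: measurable_funD | apply: measurable_funB
  | apply: measurable_funN
  | apply: (measurableT_comp (@measurable_expR R))
  | apply: (measurableT_comp (@measurable_ln R))
  | apply: (measurableT_comp (measurable_powR _))
  | apply: (measurableT_comp (@measurable_inv R))
  | apply: (measurableT_comp (continuous_measurable_fun (@sqrt_continuous R)))
  | apply: measurable_minr ].

Lemma m_normal (phi : R) : measurable_fun [set: R] (fun x => normal_prec x phi).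
Proof. rewrite /normal_prec; mfun. Qed.

Lemma m_hs : measurable_fun [set: R] (@hsplus_dens R).
Proof. rewrite /hsplus_dens; mfun. Qed.

Lemma m_hths : measurable_fun [set: R] (@hthsplus_dens R).
Proof. rewrite /hthsplus_dens; mfun. Qed.

Lemma m_pa (a : R) : measurable_fun [set: R] (pa a).
Proof. rewrite /pa; mfun. Qed.

Lemma m_gam (s : R) : measurable_fun [set: R] (fun t => t `^ (s - 1) * expR (- t)).
Proof. mfun. Qed.


Lemma GammaL_scale (s c : R) : 0 < s -> 0 < c ->
  GammaL s c = ((c `^ s)%:E *
    \int[mu]_(x in `]0%R, 1%R[) (x `^ (s - 1) * expR (- (c * x)))%:E)%E.
Proof.
move=> s0 c0.
rewrite /GammaL (@scale_integral _ c) //; last 2 first.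
- apply/measurable_EFinP; exact: (measurable_funS measurableT (@subsetT _ _) (m_gam s)).
- by move=> x _; rewrite lee_fin mulr_ge0 // ?powR_ge0 ?expR_ge0.
have -> : ( *%R c) @^-1` `]0, c[ = `]0, 1[%classic.
  apply/seteqP; split => x /=; rewrite !in_itv /= => /andP[h1 h2]; apply/andP; split; nra.
rewrite [X in (_ * X)%E](_ : _ = (\int[mu]_(x in `]0%R, 1%R[) ((c `^ (s-1))%:E * (x `^ (s-1) * expR (- (c*x)))%:E))%E); last first.
  apply: eq_integral => x; rewrite inE /= in_itv /= => /andP[x0 _].
  by rewrite -EFinM powRM ?(ltW c0) ?(ltW x0) // mulrA.
have h0 : forall x, `]0%R, 1%R[%classic x -> (0 <= (x `^ (s-1) * expR (- (c*x)))%:E)%E.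
  by move=> x _; rewrite lee_fin mulr_ge0 // ?powR_ge0 ?expR_ge0.
have hm : measurable_fun (`]0%R, 1%R[ : set R) (fun x : R => (x `^ (s-1) * expR (- (c*x)))%:E).
  apply/measurable_EFinP; apply: measurable_funM.
    exact: (measurable_funS measurableT (@subsetT _ _) (measurable_powR _)).
  apply: (measurable_funS measurableT (@subsetT _ _)).
  apply: measurableT_comp => //; apply: measurable_funN; exact: measurable_mulc.
rewrite (ge0_integralZl_EFin mu (measurable_itv _) h0 hm (powR_ge0 _ _)).
by rewrite muleA -EFinM mulr_powRB1 // ltW.
Qed.
Lemma GammaU_scale (s c : R) : 0 < s -> 0 < c ->
  GammaU s c = ((c `^ s)%:E *
    \int[mu]_(x in `]1%R, +oo[) (x `^ (s - 1) * expR (- (c * x)))%:E)%E.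
Proof.
move=> s0 c0.
rewrite /GammaU (@scale_integral _ c) //; last 2 first.
- apply/measurable_EFinP; exact: (measurable_funS measurableT (@subsetT _ _) (m_gam s)).
- by move=> x _; rewrite lee_fin mulr_ge0 // ?powR_ge0 ?expR_ge0.
have -> : ( *%R c) @^-1` `]c, +oo[ = `]1, +oo[%classic.
  by apply/seteqP; split => x /=; rewrite !in_itv /= !andbT => h; nra.
rewrite [X in (_ * X)%E](_ : _ = (\int[mu]_(x in `]1%R, +oo[) ((c `^ (s-1))%:E * (x `^ (s-1) * expR (- (c*x)))%:E))%E); last first.
  apply: eq_integral => x; rewrite inE /= in_itv /= andbT => x1; have x0 : 0 < x by lra.
  by rewrite -EFinM powRM ?(ltW c0) ?(ltW x0) // mulrA.
have h0 : forall x, `]1%R, +oo[%classic x -> (0 <= (x `^ (s-1) * expR (- (c*x)))%:E)%E.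
  by move=> x _; rewrite lee_fin mulr_ge0 // ?powR_ge0 ?expR_ge0.
have hm : measurable_fun (`]1%R, +oo[ : set R) (fun x : R => (x `^ (s-1) * expR (- (c*x)))%:E).
  apply/measurable_EFinP; apply: measurable_funM.
    exact: (measurable_funS measurableT (@subsetT _ _) (measurable_powR _)).
  apply: (measurable_funS measurableT (@subsetT _ _)).
  apply: measurableT_comp => //; apply: measurable_funN; exact: measurable_mulc.
rewrite (ge0_integralZl_EFin mu (measurable_itv _) h0 hm (powR_ge0 _ _)).
by rewrite muleA -EFinM mulr_powRB1 // ltW.
Qed.

Lemma ln_c (phi : R) : phi != 0 -> ln (phi ^+ 2 / 2) = ln `|phi| *+ 2 - ln 2.
Proof.
move=> p0; have n0 : 0 < `|phi| by rewrite normr_gt0.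
have sq0 : 0 < phi ^+ 2 by rewrite -real_normK ?num_real // exprn_gt0.
rewrite ln_div ?posrE //.
by rewrite -real_normK ?num_real // lnXn.
Qed.

Lemma coefs (a phi : R) : phi != 0 ->
  a * 2 `^ (a - 1) / (Num.sqrt pi * `|phi| `^ (1 + 2 * a)) * (phi ^+ 2 / 2) `^ (1/2 + a)
    = a * expR (- (3/2) * ln 2) / Num.sqrt pi /\
  a * 2 `^ (- a - 1) / (Num.sqrt pi * `|phi| `^ (1 - 2 * a)) * (phi ^+ 2 / 2) `^ (1/2 - a)
    = a * expR (- (3/2) * ln 2) / Num.sqrt pi.
Proof.
move=> p0; have n0 : 0 < `|phi| by rewrite normr_gt0.
have sq0 : 0 < phi ^+ 2 by rewrite -real_normK ?num_real // exprn_gt0.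
have c0 : 0 < phi ^+ 2 / 2 by rewrite divr_gt0.
have sp : 0 < Num.sqrt pi :> R by rewrite sqrtr_gt0 pi_gt0.
rewrite !powRE // ln_c // -/(ln `|phi|).
set l := ln `|phi|; set l2 := ln (2 : R).
move: sp; set q := Num.sqrt pi; clearbody q => sp.
split.
- have E : expR ((a - 1) * l2) * expR ((1/2 + a) * (l *+ 2 - l2))
      = expR (- (3/2) * l2) * expR ((1 + 2 * a) * l).
    by rewrite -!expRD; congr expR; rewrite mulr2n; field.
  transitivity (a * (expR ((a - 1) * l2) * expR ((1/2 + a) * (l *+ 2 - l2))) / (q * expR ((1 + 2 * a) * l))).
    by field; rewrite ?gt_eqF ?expR_gt0.
  by rewrite E; field; rewrite ?gt_eqF ?expR_gt0.
- have E : expR ((- a - 1) * l2) * expR ((1/2 - a) * (l *+ 2 - l2))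
      = expR (- (3/2) * l2) * expR ((1 - 2 * a) * l).
    by rewrite -!expRD; congr expR; rewrite mulr2n; field.
  transitivity (a * (expR ((- a - 1) * l2) * expR ((1/2 - a) * (l *+ 2 - l2))) / (q * expR ((1 - 2 * a) * l))).
    by field; rewrite ?gt_eqF ?expR_gt0.
  by rewrite E; field; rewrite ?gt_eqF ?expR_gt0.
Qed.
End Meas.

Section Main.
Variable R : realType.
Local Notation mu := (@lebesgue_measure R).

Lemma hs_ge0 (x : R) : 0 < x -> 0 <= hsplus_dens x.
Proof.
move=> x0; rewrite /hsplus_dens.
have p2 : 0 < pi ^+ 2 :> R by rewrite exprn_gt0 // pi_gt0.
have e0 := powR_gt0 (- (1/2)) x0.
have [x1|x1|->] := ltgtP x 1; last by rewrite ln1 mulr0 mul0r.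
- have l0 : ln x < 0 by rewrite ln_lt0 // x0 x1.
  rewrite -mulrNN -invrN; apply: divr_ge0; [rewrite -mulrN|rewrite -mulrN]; 
    apply: mulr_ge0; rewrite ?oppr_ge0 ?subr_le0 ?ltW //.
- have l0 : 0 < ln x by rewrite ln_gt0.
  by apply: divr_ge0; apply: mulr_ge0; rewrite ?subr_ge0 ?ltW.
Qed.

Lemma hths_ge0 (x : R) : 0 < x -> 0 <= hthsplus_dens x.
Proof.
move=> x0; rewrite /hthsplus_dens; apply: divr_ge0 => //.
apply: mulr_ge0; first exact: ltW.
by apply: addr_ge0; [exact: sqr_ge0 | rewrite mulr_ge0 // sqr_ge0].
Qed.

Lemma normal_ge0 (x phi : R) : 0 <= normal_prec x phi.
Proof. by rewrite /normal_prec mulr_ge0 ?sqrtr_ge0 ?expR_ge0. Qed.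



Lemma split_int (g : R -> R) : measurable_fun [set: R] g ->
  (forall x, 0 < x -> 0 <= g x) ->
  (\int[@lebesgue_measure R]_(x in `]0%R, +oo[) (g x)%:E =
   \int[@lebesgue_measure R]_(x in `]0%R, 1%R[) (g x)%:E +
   \int[@lebesgue_measure R]_(x in `]1%R, +oo[) (g x)%:E)%E.
Proof.
move=> mg g0.
have -> : `]0%R, +oo[%classic = `]0%R, 1%R[ `|` `[1%R, +oo[ :> set R.
  apply/seteqP; split => x /=; rewrite !in_itv /= ?andbT.
    by move=> x0; case: (ltP x 1) => h; [left; rewrite x0 | right].
  by case=> [/andP[]//|h]; lra.
have mg' : measurable_fun [set: R] (fun x => (g x)%:E) by exact/measurable_EFinP.
have mU : measurable_fun (`]0%R, 1%R[ `|` `[1%R, +oo[ : set R) (fun x => (g x)%:E).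
  exact: (measurable_funS measurableT (@subsetT _ _) mg').
have gU : forall x, (`]0%R, 1%R[ `|` `[1%R, +oo[ : set R) x -> (0 <= (g x)%:E)%E.
  move=> x [] /=; rewrite !in_itv /= => /andP[h _]; rewrite lee_fin g0 //; lra.
have dj : [disjoint (`]0%R, 1%R[ : set R) & `[1%R, +oo[].
  apply/disj_setPS => x [] /=; rewrite !in_itv /= => /andP[_ h1] /andP[h2 _]; lra.
rewrite (ge0_integral_setU (@lebesgue_measure R) (measurable_itv _) (measurable_itv _) mU gU dj).
rewrite -integral_itv_obnd_cbnd //.
exact: (measurable_funS measurableT (@subsetT _ _) mg').
Qed.

End Main.

Theorem theorem2 (R : realType) (a : R) (ha0 : 0 < a) (ha1 : a < 1 / 2) :
  exists C D : R, 0 < C /\ 0 < D /\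
    forall phi : R, phi != 0 ->
      let mid : \bar R :=
        ((a * 2 `^ (a - 1) / (Num.sqrt pi * `|phi| `^ (1 + 2 * a)))%:E
           * GammaL (1 / 2 + a) (phi ^+ 2 / 2)
         + (a * 2 `^ (- a - 1) / (Num.sqrt pi * `|phi| `^ (1 - 2 * a)))%:E
           * GammaU (1 / 2 - a) (phi ^+ 2 / 2))%E in
      (C%:E * f_HS phi <= mid)%E /\ (mid <= D%:E * f_HTHS phi)%E.
Proof.
have pi0 : 0 < pi :> R := pi_gt0 R.
have sp : 0 < Num.sqrt pi :> R by rewrite sqrtr_gt0.
have s2p : 0 < Num.sqrt (2 * pi) :> R by rewrite sqrtr_gt0 mulr_gt0.
set K := a * expR (- (3/2) * ln 2) / Num.sqrt pi.
have K0 : 0 < K by rewrite /K divr_gt0 // mulr_gt0 // expR_gt0.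
have Q0 : 0 < (4 / a ^+ 2 + 4 * pi ^+ 2) / 2 :> R.
  by rewrite divr_gt0 // addr_gt0 // ?divr_gt0 ?mulr_gt0 ?exprn_gt0.
set C := K * Num.sqrt (2 * pi) * pi ^+ 2 * (1/2 - a).
set D' := K * Num.sqrt (2 * pi) * ((4 / a ^+ 2 + 4 * pi ^+ 2) / 2).
have C0 : 0 < C by apply: mulr_gt0; [apply: mulr_gt0; [exact: mulr_gt0 | exact: exprn_gt0] | lra].
have D0 : 0 < D' by apply: mulr_gt0 => //; exact: mulr_gt0.
exists C, D'.
split=> //; split=> //.
move=> phi p0 mid.
set c := phi ^+ 2 / 2.
have sq0 : 0 < phi ^+ 2 by rewrite -real_normK ?num_real // exprn_gt0 // normr_gt0.
have c0 : 0 < c by rewrite divr_gt0.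
pose g := fun x : R => pa a x * expR (- (x * phi ^+ 2) / 2).
have mg : measurable_fun [set: R] g.
  apply: measurable_funM; first exact: m_pa.
  apply: measurableT_comp => //; apply: measurable_funM => //.
  apply: measurable_funN; apply: measurable_funM => //; exact: measurable_cst.
have g0 : forall x, 0 < x -> 0 <= g x.
  by move=> x _; rewrite /g mulr_ge0 // ?expR_ge0 // /pa le_min !powR_ge0.
pose J := (\int[@lebesgue_measure R]_(x in `]0%R, +oo[) (g x)%:E)%E.
have midE : mid = (K%:E * J)%E.
  rewrite /mid GammaL_scale //; last by lra.
  rewrite GammaU_scale //; last by lra.
  have [E1 E2] := @coefs R a phi p0.
  rewrite !muleA -!EFinM -/c E1 E2 -ge0_muleDr; last 2 first.
  - apply: integral_ge0 => x; rewrite /= in_itv /= => /andP[x0 _].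
    by rewrite lee_fin mulr_ge0 ?powR_ge0 ?expR_ge0.
  - apply: integral_ge0 => x; rewrite /= in_itv /= => /andP[x0 _].
    by rewrite lee_fin mulr_ge0 ?powR_ge0 ?expR_ge0.
  rewrite /J split_int //; congr (_ * (_ + _))%E.
  - apply: eq_integral => x; rewrite inE /= in_itv /= => /andP[x0 x1].
    congr EFin; rewrite /g /pa.
    have -> : Num.min (x `^ (a - 1 / 2)) (x `^ (- a - 1 / 2)) = x `^ (a - 1 / 2).
      apply/min_idPl; apply: ger_powR; [by rewrite x0 ltW | lra].
    congr (_ * _); first by congr powR; lra.
    by congr expR; rewrite /c; field.
  - apply: eq_integral => x; rewrite inE /= in_itv /= andbT => x1.
    congr EFin; rewrite /g /pa.
    have -> : Num.min (x `^ (a - 1 / 2)) (x `^ (- a - 1 / 2)) = x `^ (- a - 1 / 2).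
      apply/min_idPr; apply: ler_powR; [exact: ltW | lra].
    congr (_ * _); first by congr powR; lra.
    by congr expR; rewrite /c; field.
have mN := @m_normal R phi.
have fg0 : forall x, `]0%R, +oo[%classic x -> (0 <= (g x)%:E)%E.
  by move=> x; rewrite /= in_itv /= andbT => x0; rewrite lee_fin g0.
have mfg : measurable_fun (`]0%R, +oo[ : set R) (fun x => (g x)%:E).
  by apply/measurable_EFinP; exact: (measurable_funS measurableT (@subsetT _ _) mg).
split.
- rewrite midE /f_HS /marginal.
  have f10 : forall x, `]0%R, +oo[%classic x -> (0 <= (normal_prec x phi * hsplus_dens x)%:E)%E.
    move=> x; rewrite /= in_itv /= andbT => x0.
    by rewrite lee_fin mulr_ge0 ?normal_ge0 ?hs_ge0.
  have mf1 : measurable_fun (`]0%R, +oo[ : set R) (fun x => (normal_prec x phi * hsplus_dens x)%:E).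
    apply/measurable_EFinP.
    exact: (measurable_funS measurableT (@subsetT _ _) (measurable_funM mN (@m_hs R))).
  rewrite -(ge0_integralZl_EFin (@lebesgue_measure R) (measurable_itv _) f10 mf1 (ltW C0)).
  rewrite /J -(ge0_integralZl_EFin (@lebesgue_measure R) (measurable_itv _) fg0 mfg (ltW K0)).
  apply: ge0_le_integral => //.
  + move=> x Dx; apply: mule_ge0; [by rewrite lee_fin ltW | exact: f10].
  + exact: measurable_funeM.
  + exact: measurable_funeM.
  + move=> x; rewrite /= in_itv /= andbT => x0; rewrite -!EFinM lee_fin /g.
    by apply: lower_pt => //; exact: ltW.
- rewrite midE /f_HTHS /marginal.
  have f10 : forall x, `]0%R, +oo[%classic x -> (0 <= (normal_prec x phi * hthsplus_dens x)%:E)%E.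
    move=> x; rewrite /= in_itv /= andbT => x0.
    by rewrite lee_fin mulr_ge0 ?normal_ge0 ?hths_ge0.
  have mf1 : measurable_fun (`]0%R, +oo[ : set R) (fun x => (normal_prec x phi * hthsplus_dens x)%:E).
    apply/measurable_EFinP.
    exact: (measurable_funS measurableT (@subsetT _ _) (measurable_funM mN (@m_hths R))).
  rewrite -(ge0_integralZl_EFin (@lebesgue_measure R) (measurable_itv _) f10 mf1 (ltW D0)).
  rewrite /J -(ge0_integralZl_EFin (@lebesgue_measure R) (measurable_itv _) fg0 mfg (ltW K0)).
  apply: ge0_le_integral => //.
  + move=> x Dx; apply: mule_ge0; [by rewrite lee_fin ltW | exact: fg0].
  + exact: measurable_funeM.
  + exact: measurable_funeM.
  + move=> x; rewrite /= in_itv /= andbT => x0; rewrite -!EFinM lee_fin /g.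
    by apply: upper_pt => //; exact: ltW.
Qed.
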